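(* Let $R$ be a ring, let $\mathcal C$ be a full subcategory of $\operatorname{Mod-}R$ all of whose objects are indecomposable slender right $R$-modules, and let $\mathcal P,\mathcal Q$ be completely prime ideals of $\mathcal C$ such that for every $A\in\operatorname{Ob}(\mathcal C)$ an endomorphism $f\colon A\to A$ is an automorphism if and only if $f\notin\mathcal P(A,A)\cup\mathcal Q(A,A)$. Assume $\mathcal C$ satisfies Condition (DSP). Let $\{A_i\mid i\in I\}$ and $\{B_j\mid j\in J\}$ be countable families of objects of $\mathcal C$ with $\prod_{i\in I}A_i\cong\prod_{j\in J}B_j$. Then there exist bijections $\sigma,\tau\colon I\to J$ with $[A_i]_{\mathcal P}=[B_{\sigma(i)}]_{\mathcal P}$ and $[A_i]_{\mathcal Q}=[B_{\tau(i)}]_{\mathcal Q}$ for every $i\in I$.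
   Context: A completely prime ideal $\mathcal P$ of a full subcategory $\mathcal C$ of $\operatorname{Mod-}R$ consists of a subgroup $\mathcal P(A,B)$ of $\operatorname{Hom}_R(A,B)$ for each pair of objects $A,B$ of $\mathcal C$ such that: (1) for all objects $A,B,C$ and morphisms $f\colon A\to B$, $g\colon B\to C$, one has $gf\in\mathcal P(A,C)$ if and only if $f\in\mathcal P(A,B)$ or $g\in\mathcal P(B,C)$; (2) $\mathcal P(A,A)\neq\operatorname{Hom}_R(A,A)$ for every object $A$. For objects $A,B$, write $[A]_{\mathcal P}=[B]_{\mathcal P}$ (''same $\mathcal P$ class'') if $\mathcal P(A,B)\ne\operatorname{Hom}_R(A,B)$ and $\mathcal P(B,A)\neq\operatorname{Hom}_R(B,A)$. $\mathcal C$ satisfies Condition (DSP) if whenever $A,B,C,D$ are right $R$-modules with $A\oplus B\cong C\oplus D$ and $A,B,C\in\operatorname{Ob}(\mathcal C)$, then $D\in\operatorname{Ob}(\mathcal C)$. A right $R$-module $M$ is slender if for every homomorphism $f\colon R^\omega=\prod_{n<\omega}e_nR\to M$ (with $e_n$ the element having $1$ in position $n$ and $0$ elsewhere) there is $n_0$ with $f(e_n)=0$ for all $n\ge n_0$. ''Countable'' means finite or countably infinite. *)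

(* Defs.v *)
(* Right R-modules are modelled as left modules over the
   converse ring R^c:  (r : R^c) *: m  stands for  m . r. *)
From HB Require Import structures.
From mathcomp Require Import all_boot all_order all_algebra.
Set Implicit Arguments. Unset Strict Implicit. Unset Printing Implicit Defensive.
Import Order.TTheory GRing.Theory Num.Theory.
Local Open Scope ring_scope.

Notation rmod R := (lmodType (R^c)).

Definition is_hom (R : pzRingType) (A B : rmod R) (f : A -> B) : Prop :=
  (forall x y : A, f (x + y) = f x + f y) /\
  (forall (r : R^c) (x : A), f (r *: x) = r *: f x).

Definition submod (R : pzRingType) (M : rmod R) (X : M -> Prop) : Prop :=
  X 0 /\ (forall x y, X x -> X y -> X (x + y)) /\
  (forall (r : R^c) x, X x -> X (r *: x)).

Definition indecomposable (R : pzRingType) (M : rmod R) : Prop :=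
  (exists m : M, m <> 0) /\
  forall X Y : M -> Prop, submod X -> submod Y ->
    (forall m, X m -> Y m -> m = 0) ->
    (forall m, exists x y, X x /\ Y y /\ m = x + y) ->
    (forall x, X x -> x = 0) \/ (forall y, Y y -> y = 0).

Definition unit_vec (R : pzRingType) (n : nat) : nat -> R :=
  fun k => if k == n then 1 else 0.

(* Homomorphisms of right R-modules R^omega -> M, where R^omega = nat -> R
   with componentwise addition and right action (x . r)(k) = x k * r. *)
Definition is_hom_Romega (R : pzRingType) (M : rmod R) (f : (nat -> R) -> M)
  : Prop :=
  (forall x y : nat -> R, f (fun k => x k + y k) = f x + f y) /\
  (forall (r : R) (x : nat -> R), f (fun k => x k * r) = (r : R^c) *: f x).

Definition slender (R : pzRingType) (M : rmod R) : Prop :=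
  forall f : (nat -> R) -> M, is_hom_Romega f ->
    exists n0 : nat, forall n, (n0 <= n)%N -> f (unit_vec R n) = 0.

(* Full subcategories of Mod-R are given by their class of objects. *)
Definition subcat (R : pzRingType) := rmod R -> Prop.

Definition hom_ideal (R : pzRingType) :=
  forall A B : rmod R, (A -> B) -> Prop.

Definition completely_prime (R : pzRingType) (C : subcat R)
    (P : hom_ideal R) : Prop :=
  (forall A B, C A -> C B ->
     (forall f, P A B f -> is_hom f) /\
     P A B (fun _ => 0) /\
     (forall f g, P A B f -> P A B g -> P A B (fun x => f x - g x))) /\
  (forall A B D, C A -> C B -> C D ->
     forall (f : A -> B) (g : B -> D), is_hom f -> is_hom g ->
       (P A D (fun x => g (f x)) <-> P A B f \/ P B D g)) /\
  (forall A, C A -> exists f : A -> A, is_hom f /\ ~ P A A f).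

Definition same_class (R : pzRingType) (P : hom_ideal R) (A B : rmod R)
  : Prop :=
  (exists f : A -> B, is_hom f /\ ~ P A B f) /\
  (exists g : B -> A, is_hom g /\ ~ P B A g).

(* A (+) B ~= C (+) D, with external direct sums realised as pair types. *)
Definition dsum_iso (R : pzRingType) (A B C D : rmod R)
    (phi : A * B -> C * D) : Prop :=
  bijective phi /\
  (forall x y : A * B,
     phi (x.1 + y.1, x.2 + y.2) = ((phi x).1 + (phi y).1, (phi x).2 + (phi y).2)) /\
  (forall (r : R^c) (x : A * B),
     phi (r *: x.1, r *: x.2) = (r *: (phi x).1, r *: (phi x).2)).

Definition DSP (R : pzRingType) (C : subcat R) : Prop :=
  forall A B C' D : rmod R, C A -> C B -> C C' ->
    (exists phi : A * B -> C' * D, dsum_iso phi) -> C D.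

(* prod_i A_i ~= prod_j B_j, products realised as dependent function types
   with componentwise operations. *)
Definition prod_iso (R : pzRingType) (I J : Type) (A : I -> rmod R)
    (B : J -> rmod R) (Phi : (forall i, A i) -> (forall j, B j)) : Prop :=
  bijective Phi /\
  (forall x y : forall i, A i,
     Phi (fun i => x i + y i) = (fun j => Phi x j + Phi y j)) /\
  (forall (r : R^c) (x : forall i, A i),
     Phi (fun i => r *: x i) = (fun j => r *: Phi x j)).

(* Main.v *)
Require Import Defs.
From HB Require Import structures.
From mathcomp Require Import all_boot all_order all_algebra.
From Stdlib Require Import ClassicalEpsilon FunctionalExtensionality.
Set Implicit Arguments. Unset Strict Implicit. Unset Printing Implicit Defensive.
Import Order.TTheory GRing.Theory Num.Theory.
Local Open Scope ring_scope.

Section Basics.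
Variable R : pzRingType.
Implicit Types A B D : rmod R.

Lemma hom0 A B (f : A -> B) : is_hom f -> f 0 = 0.
Proof. by move=> [fD _]; apply: (addrI (f 0)); rewrite -fD !addr0. Qed.

Lemma homN A B (f : A -> B) x : is_hom f -> f (- x) = - f x.
Proof.
move=> hf; apply: (addrI (f x)); rewrite -hf.1 !subrr; exact: hom0.
Qed.

Lemma homB A B (f : A -> B) x y : is_hom f -> f (x - y) = f x - f y.
Proof. by move=> hf; rewrite hf.1 homN. Qed.

Lemma hom_sum A B (f : A -> B) (K : Type) (r : seq K) (p : pred K) F :
  is_hom f -> f (\sum_(k <- r | p k) F k) = \sum_(k <- r | p k) f (F k).
Proof.
move=> hf; elim: r => [|k r IH]; first by rewrite !big_nil hom0.
by rewrite !big_cons; case: (p k) => //; rewrite hf.1 IH.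
Qed.

Lemma hom_id A : is_hom (fun x : A => x).
Proof. by []. Qed.

Lemma hom_comp A B D (f : A -> B) (g : B -> D) :
  is_hom f -> is_hom g -> is_hom (fun x => g (f x)).
Proof.
move=> [fD fZ] [gD gZ]; split=> [x y|r x]; first by rewrite fD gD.
by rewrite fZ gZ.
Qed.

Lemma hom_add A B (f g : A -> B) :
  is_hom f -> is_hom g -> is_hom (fun x => f x + g x).
Proof.
move=> [fD fZ] [gD gZ]; split=> [x y|r x].
  by rewrite fD gD addrACA.
by rewrite fZ gZ scalerDr.
Qed.

Lemma hom_opp A B (f : A -> B) : is_hom f -> is_hom (fun x => - f x).
Proof.
move=> [fD fZ]; split=> [x y|r x]; first by rewrite fD opprD.
by rewrite fZ scalerN.
Qed.

Lemma hom_sub A B (f g : A -> B) :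
  is_hom f -> is_hom g -> is_hom (fun x => f x - g x).
Proof. by move=> hf hg; apply: hom_add => //; apply: hom_opp. Qed.

Lemma hom_zero A B : is_hom (fun _ : A => 0 : B).
Proof. by split=> [x y|r x]; rewrite ?addr0 ?scaler0. Qed.

Lemma hom_sumf A B (K : Type) (r : seq K) (p : pred K) (F : K -> A -> B) :
  (forall k, p k -> is_hom (F k)) ->
  is_hom (fun x => \sum_(k <- r | p k) F k x).
Proof.
move=> hF; elim: r => [|k r IH].
  have -> : (fun x => \sum_(k <- [::] | p k) F k x) = (fun _ => 0).
    by apply: functional_extensionality => x; rewrite big_nil.
  exact: hom_zero.
have -> : (fun x => \sum_(k0 <- k :: r | p k0) F k0 x) =
   (fun x => if p k then F k x + \sum_(k0 <- r | p k0) F k0 x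
             else \sum_(k0 <- r | p k0) F k0 x).
  by apply: functional_extensionality => x; rewrite big_cons.
case pk: (p k); last exact: IH.
exact: hom_add (hF _ pk) IH.
Qed.

End Basics.

Lemma inv_hom (R : pzRingType) (A B : rmod R) (f : A -> B) g :
  is_hom f -> cancel f g -> cancel g f -> is_hom g.
Proof.
move=> [fD fZ] fK gK; split=> [x y|r x].
  by apply: (can_inj fK); rewrite fD !gK.
by apply: (can_inj fK); rewrite fZ !gK.
Qed.

Unset Implicit Arguments.
Section CP.
Variables (R : pzRingType) (C : subcat R) (P : hom_ideal R).
Hypothesis HP : completely_prime C P.
Implicit Types A B D : rmod R.
Set Implicit Arguments.

Lemma P0 A B : C A -> C B -> P A B (fun _ => 0).
Proof. by move=> CA CB; case: (HP.1 A B CA CB) => _ []. Qed.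

Lemma Psub A B f g : C A -> C B -> P A B f -> P A B g ->
  P A B (fun x => f x - g x).
Proof. by move=> CA CB; case: (HP.1 A B CA CB) => _ [] _; apply. Qed.

Lemma Padd A B f g : C A -> C B -> P A B f -> P A B g ->
  P A B (fun x => f x + g x).
Proof.
move=> CA CB Pf Pg.
have h := Psub CA CB Pf (Psub CA CB (P0 CA CB) Pg).
have -> : (fun x => f x + g x) = (fun x => f x - (0 - g x)) => //.
by apply: functional_extensionality => x; rewrite sub0r opprK.
Qed.

Lemma Psum A B (K : Type) (r : seq K) (p : pred K) (F : K -> A -> B) :
  C A -> C B -> (forall k, p k -> P A B (F k)) ->
  P A B (fun x => \sum_(k <- r | p k) F k x).
Proof.
move=> CA CB hF; elim: r => [|k r IH].
  have -> : (fun x => \sum_(k <- [::] | p k) F k x) = (fun _ => 0).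
    by apply: functional_extensionality => x; rewrite big_nil.
  exact: P0.
have -> : (fun x => \sum_(k0 <- k :: r | p k0) F k0 x) =
   (fun x => if p k then F k x + \sum_(k0 <- r | p k0) F k0 x
             else \sum_(k0 <- r | p k0) F k0 x).
  by apply: functional_extensionality => x; rewrite big_cons.
case pk: (p k); last exact: IH.
exact: Padd (hF _ pk) IH.
Qed.

Lemma Pcomp A B D (f : A -> B) (g : B -> D) : C A -> C B -> C D ->
  is_hom f -> is_hom g -> (P A D (fun x => g (f x)) <-> P A B f \/ P B D g).
Proof. by move=> CA CB CD hf hg; apply: HP.2.1. Qed.

Lemma Pid_not A : C A -> ~ P A A (fun x => x).
Proof.
move=> CA Pid; case: (HP.2.2 A CA) => f [hf nPf]; apply: nPf.
have := (Pcomp CA CA CA (@hom_id R A) hf).2 (or_introl Pid); exact.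
Qed.

Lemma sc_refl A : C A -> same_class P A A.
Proof. by move=> CA; split; exists (fun x => x); split => //; apply: Pid_not. Qed.

Lemma sc_sym A B : same_class P A B -> same_class P B A.
Proof. by case. Qed.

Lemma sc_trans A B D : C A -> C B -> C D ->
  same_class P A B -> same_class P B D -> same_class P A D.
Proof.
move=> CA CB CD [[f [hf nf]] [g [hg ng]]] [[f' [hf' nf']] [g' [hg' ng']]].
split.
  exists (fun x => f' (f x)); split; first exact: hom_comp.
  by move/(Pcomp CA CB CD hf hf'); case.
exists (fun x => g (g' x)); split; first exact: hom_comp.
by move/(Pcomp CD CB CA hg' hg); case.
Qed.

Lemma sc_of_comp A B (f : A -> B) (g : B -> A) : C A -> C B ->
  is_hom f -> is_hom g -> ~ P A A (fun x => g (f x)) -> same_class P A B.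
Proof.
move=> CA CB hf hg nP; split.
  by exists f; split => // Pf; apply: nP; apply/(Pcomp CA CB CA hf hg); left.
by exists g; split => // Pg; apply: nP; apply/(Pcomp CA CB CA hf hg); right.
Qed.

End CP.

Section Ker.
Variables (R : pzRingType) (U W X : rmod R) (g : U -> X) (h : W -> X).
Hypotheses (hg : is_hom g) (hh : is_hom h).

Definition kerP (p : U * W) : bool := g p.1 + h p.2 == 0.

Record kerT := KerT { kval : U * W; kvalP : kerP kval }.

HB.instance Definition _ := [isSub for kval].
HB.instance Definition _ := [Choice of kerT by <:].

Lemma kerP0 : kerP (0, 0).
Proof. by rewrite /kerP /= (hom0 hg) (hom0 hh) addr0. Qed.

Lemma kerPD p q : kerP p -> kerP q -> kerP (p.1 + q.1, p.2 + q.2).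
Proof.
rewrite /kerP /= hg.1 hh.1 => /eqP hp /eqP hq.
by rewrite addrACA hp hq addr0.
Qed.

Lemma kerPN p : kerP p -> kerP (- p.1, - p.2).
Proof.
by rewrite /kerP /= (homN _ hg) (homN _ hh) -opprD oppr_eq0.
Qed.

Lemma kerPZ (r : R^c) p : kerP p -> kerP (r *: p.1, r *: p.2).
Proof.
by rewrite /kerP /= hg.2 hh.2 -scalerDr => /eqP ->; rewrite scaler0.
Qed.

Definition ker0 : kerT := KerT kerP0.
Definition keradd (a b : kerT) : kerT := KerT (kerPD (kvalP a) (kvalP b)).
Definition keropp (a : kerT) : kerT := KerT (kerPN (kvalP a)).
Definition kerscale (r : R^c) (a : kerT) : kerT := KerT (kerPZ r (kvalP a)).

Lemma kval_inj : injective kval.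
Proof. exact: val_inj. Qed.

Lemma ker_addA : associative keradd.
Proof. by move=> a b c; apply: kval_inj; rewrite /= !addrA. Qed.
Lemma ker_addC : commutative keradd.
Proof. by move=> a b; apply: kval_inj; rewrite /= addrC [X in (_, X)]addrC. Qed.
Lemma ker_add0 : left_id ker0 keradd.
Proof. by move=> a; apply: kval_inj; rewrite /= !add0r; case: (kval a). Qed.
Lemma ker_addN : left_inverse ker0 keropp keradd.
Proof. by move=> a; apply: kval_inj; rewrite /= !addNr. Qed.

HB.instance Definition _ := GRing.isZmodule.Build kerT ker_addA ker_addC ker_add0 ker_addN.

Lemma ker_scaleA a b v : kerscale a (kerscale b v) = kerscale (a * b) v.
Proof. by apply: kval_inj; rewrite /= !scalerA. Qed.
Lemma ker_scale1 : left_id 1 kerscale.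
Proof. by move=> a; apply: kval_inj; rewrite /= !scale1r; case: (kval a). Qed.
Lemma ker_scaleDr : right_distributive kerscale +%R.
Proof. by move=> r a b; apply: kval_inj; rewrite /= !scalerDr. Qed.
Lemma ker_scaleDl v : {morph kerscale^~ v: a b / a + b}.
Proof. by move=> a b; apply: kval_inj; rewrite /= !scalerDl. Qed.

HB.instance Definition _ := GRing.Zmodule_isLmodule.Build (R^c) kerT
  ker_scaleA ker_scale1 ker_scaleDr ker_scaleDl.

Definition kerM : rmod R := kerT.

Lemma kval_add (a b : kerM) : kval (a + b) = ((kval a).1 + (kval b).1, (kval a).2 + (kval b).2).
Proof. by []. Qed.
Lemma kval_scale r (a : kerM) : kval (r *: a) = (r *: (kval a).1, r *: (kval a).2).
Proof. by []. Qed.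
Lemma kval_zero : kval (0 : kerM) = (0, 0).
Proof. by []. Qed.

End Ker.

From Stdlib Require Import Classical.

Section Single.
Variables (R : pzRingType) (I : eqType) (A : I -> rmod R).

Definition single (i : I) (x : A i) : forall j, A j :=
  fun j => match @eqP _ i j with ReflectT e => eq_rect i A x j e | ReflectF _ => 0 end.

Lemma single_id i x : single x i = x.
Proof. by rewrite /single; case: eqP => // e; rewrite [e]eq_axiomK. Qed.

Lemma single_neq i j x : i != j -> single (i:=i) x j = 0.
Proof. by rewrite /single; case: eqP. Qed.

Lemma single_add i (x y : A i) j : single (x + y) j = single x j + single y j.
Proof.
by rewrite /single; case: eqP => [e|_]; [case: j / e | rewrite addr0].
Qed.

Lemma single_scale i r (x : A i) j : single (r *: x) j = r *: single x j.
Proof.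
by rewrite /single; case: eqP => [e|_]; [case: j / e | rewrite scaler0].
Qed.

Lemma single0 i j : single (0 : A i) j = 0.
Proof. by rewrite /single; case: eqP => [e|_] //; case: j / e. Qed.

End Single.

Section Tail.
Variables (R : pzRingType) (J : countType) (B : J -> rmod R) (M : rmod R).
Variable f : (forall j, B j) -> M.
Hypothesis fD : forall y z, f (fun j => y j + z j) = f y + f z.
Hypothesis fZ : forall (r : R^c) y, f (fun j => r *: y j) = r *: f y.

Lemma f0 : f (fun _ => 0) = 0.
Proof.
apply: (addrI (f (fun _ => 0))); rewrite -fD addr0.
by have -> : (fun j : J => (0 : B j) + 0) = (fun _ => 0) by
  apply: functional_extensionality_dep => j; rewrite addr0.
Qed.

Lemma fB y z : f (fun j => y j - z j) = f y - f z.
Proof.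
apply: (addrI (f z)); rewrite -fD addrC subrK.
by congr f; apply: functional_extensionality_dep => j; rewrite addrC subrK.
Qed.

Lemma sum_delta (V : zmodType) (v : nat -> V) n N :
  \sum_(m < N) (if nat_of_ord m == n then v m else 0) = if (n < N)%N then v n else 0.
Proof.
elim: N => [|N IH]; first by rewrite big_ord0.
rewrite big_ord_recr /= IH.
case: (ltngtP n N) => [lt|gt|->].
- by rewrite ltnS (ltnW lt) addr0.
- by rewrite ltnS leqNgt gt addr0.
- by rewrite ltnSn add0r.
Qed.

Lemma tail_lemma : slender M ->
  exists n0, forall y : forall j, B j,
    (forall j, (pickle j < n0)%N -> y j = 0) -> f y = 0.
Proof.
move=> sM; apply: NNPP => H.
have H' : forall n, exists y : forall j, B j,
    (forall j, (pickle j < n)%N -> y j = 0) /\ f y <> 0.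
  move=> n; apply: NNPP => Hn; apply: H; exists n => y hy.
  by apply: NNPP => fy; apply: Hn; exists y.
pose ys n := proj1_sig (constructive_indefinite_description _ (H' n)).
have ysP n : (forall j, (pickle j < n)%N -> ys n j = 0) /\ f (ys n) <> 0.
  exact: (proj2_sig (constructive_indefinite_description _ (H' n))).
pose g (x : nat -> R) : forall j, B j :=
  fun j => \sum_(m < (pickle j).+1) (x m : R^c) *: ys m j.
have hom : is_hom_Romega (fun x => f (g x)).
  split.
    move=> x y; rewrite -fD; congr f; apply: functional_extensionality_dep => j.
    by rewrite /g -big_split /=; apply: eq_bigr => m _; rewrite scalerDl.
  move=> r x; rewrite -fZ; congr f; apply: functional_extensionality_dep => j.
  rewrite /g scaler_sumr; apply: eq_bigr => m _; rewrite scalerA //.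
have [n0 Hn0] := sM _ hom.
have := Hn0 n0 (leqnn n0); have -> : g (unit_vec R n0) = ys n0.
  apply: functional_extensionality_dep => j; rewrite /g /unit_vec.
  have -> : \sum_(m < (pickle j).+1) ((if nat_of_ord m == n0 then 1 else 0 : R) : R^c) *: ys m j
      = \sum_(m < (pickle j).+1) (if nat_of_ord m == n0 then ys m j else 0).
    by apply: eq_bigr => m _; case: eqP => _; rewrite ?scale1r ?scale0r.
  rewrite (sum_delta (fun m => ys m j)); case: ltnP => // le.
  by rewrite (ysP n0).1.
by case: (ysP n0).
Qed.

Definition restrict (s : seq J) (y : forall j, B j) : forall j, B j :=
  fun j => if j \in s then y j else 0.

Lemma restrict_sum s y : uniq s ->
  f (restrict s y) = \sum_(j <- s) f (single (y j)).
Proof.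
elim: s => [|j s IH] /=.
  move=> _; rewrite big_nil -f0; congr f; rewrite /restrict.
move=> /andP [jns us]; rewrite big_cons -IH // -fD; congr f.
rewrite /restrict; apply: functional_extensionality_dep => j0; rewrite in_cons.
case: (eqVneq j0 j) => [->|ne] /=.
  by rewrite (negbTE jns) single_id addr0.
by rewrite single_neq 1?eq_sym // add0r.
Qed.

Lemma expand_lemma : slender M ->
  exists n0, forall N, (n0 <= N)%N -> forall y : forall j, B j,
    f y = \sum_(j <- pmap (@pickle_inv J) (iota 0 N)) f (single (y j)).
Proof.
move=> sM; have [n0 Hn0] := tail_lemma sM; exists n0 => N le y.
set s := pmap _ _.
have us : uniq s by apply: (pmap_uniq (@pickle_invK J)); exact: iota_uniq.
have ms j : (j \in s) = (pickle j < N)%N.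
  by rewrite /s (can2_mem_pmap (@pickle_invK J) (@pickleK_inv J)) mem_iota.
rewrite -restrict_sum //.
have := Hn0 (fun j => y j - restrict s y j); rewrite fB => h.
apply/eqP; rewrite -subr_eq0 h //.
move=> j lt; rewrite /restrict ms (leq_trans lt le) subrr //.
Qed.

End Tail.

Definition tb (p : Prop) : bool :=
  if excluded_middle_informative p then true else false.

Lemma tbP (p : Prop) : reflect p (tb p).
Proof. by rewrite /tb; case: excluded_middle_informative => h; constructor. Qed.

Lemma big_option_split (V : Type) (idx : V) (op : Monoid.com_law idx)
  (T : finType) (p : pred (option T)) (G : option T -> V) :
  \big[op/idx]_(o | p o) G o =
  op (if p None then G None else idx) (\big[op/idx]_(k | p (Some k)) G (Some k)).
Proof.
rewrite (perm_big (None :: map Some (index_enum T))); last first.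
  apply: uniq_perm; first exact: index_enum_uniq.
    rewrite /= (map_inj_uniq (@Some_inj _)) index_enum_uniq andbT.
    by apply/negP => /mapP [].
  by case=> [x|]; rewrite mem_index_enum ?in_cons ?mem_map ?mem_index_enum //; exact: Some_inj.
rewrite big_cons big_map.
by case: (p None) => //; rewrite Monoid.mul1m.
Qed.

Lemma card_option_split (T : finType) (p : pred (option T)) :
  #|[pred o | p o]| = (p None + #|[pred k | p (Some k)]|)%N.
Proof.
rewrite -!sum1_card (@big_option_split nat 0%N addn T p (fun _ => 1%N)).
by case: (p None).
Qed.

Unset Implicit Arguments.
Section Core.
Variables (R : pzRingType) (C : subcat R) (P Q : hom_ideal R).
Hypothesis HCobj : forall M, C M -> indecomposable M /\ slender M.
Hypothesis HP : completely_prime C P.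
Hypothesis HQ : completely_prime C Q.
Hypothesis Haut : forall A, C A -> forall f : A -> A, is_hom f ->
            (bijective f <-> ~ (P A A f \/ Q A A f)).
Hypothesis Hdsp : DSP C.

Lemma some_term (P' : hom_ideal R) (HP' : completely_prime C P') (A : rmod R)
  (CA : C A) (K : finType) (aK : pred K) (t : K -> A -> A) :
  (forall x, \sum_(k | aK k) t k x = x) -> exists k, aK k /\ ~ P' A A (t k).
Proof.
move=> hsum; apply: NNPP => H; apply: (Pid_not HP' CA).
have -> : (fun x : A => x) = (fun x => \sum_(k <- index_enum K | aK k) t k x).
  by apply: functional_extensionality => x; rewrite hsum.
apply: (Psum HP' (index_enum K) CA CA) => k ak; apply: NNPP => npk; apply: H; by exists k.
Qed.

Definition Good (c0 : rmod R) (F : finType) (aF : pred F) (A : F -> rmod R)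
  (K : finType) (aK : pred K) (Y : K -> rmod R)
  (al : forall i k, Y k -> A i) (be : forall k i, A i -> Y k) : Prop :=
 (forall i, aF i -> C (A i) /\ same_class P (A i) c0) /\
 (forall k, aK k -> C (Y k)) /\
 (forall i k, aF i -> aK k -> is_hom (al i k) /\ is_hom (be k i)) /\
 (forall i, aF i -> forall x, \sum_(k | aK k) al i k (be k i x) = x) /\
 (forall i i', aF i -> aF i' -> i != i' -> forall x,
     \sum_(k | aK k) al i' k (be k i x) = 0).

Definition cnt (c0 : rmod R) (K : finType) (aK : pred K) (Y : K -> rmod R) : nat :=
  #|[pred k | aK k && tb (same_class P (Y k) c0)]|.

Lemma sc_c0 (c0 : rmod R) (Cc0 : C c0) (A B : rmod R) (CA : C A) (CB : C B)
  (f : A -> B) (g : B -> A) : is_hom f -> is_hom g ->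
  ~ P A A (fun x => g (f x)) -> same_class P A c0 -> same_class P B c0.
Proof.
move=> hf hg nP sA.
apply: (sc_trans HP CB CA Cc0) sA.
exact: sc_sym (sc_of_comp HP CA CB hf hg nP).
Qed.

Lemma step_simple (c0 : rmod R) (Cc0 : C c0) (F : finType) (aF : pred F)
  (A : F -> rmod R) (K : finType) (aK : pred K) (Y : K -> rmod R)
  (al : forall i k, Y k -> A i) (be : forall k i, A i -> Y k) (i1 : F) (j : K) :
  Good c0 F aF A K aK Y al be -> aF i1 -> aK j ->
  ~ P (A i1) (A i1) (fun x => al i1 j (be j i1 x)) ->
  ~ Q (A i1) (A i1) (fun x => al i1 j (be j i1 x)) ->
  exists (K' : finType) (aK' : pred K') (Y' : K' -> rmod R)
    (al' : forall i k, Y' k -> A i) (be' : forall k i, A i -> Y' k),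
    Good c0 F [pred i | aF i && (i != i1)] A K' aK' Y' al' be' /\
    (cnt c0 K' aK' Y' < cnt c0 K aK Y)%N.
Proof.
move=> [HA [HY [Hh [Hid H0]]]] ai1 aj nP nQ.
have [CA1 cA1] := HA i1 ai1; have CYj := HY j aj.
have [hal hbe] := Hh i1 j ai1 aj.
have hu : is_hom (fun x => al i1 j (be j i1 x)) by exact: hom_comp.
have [ui uK Ku] : bijective (fun x => al i1 j (be j i1 x)).
  by apply/(Haut _ CA1 _ hu); case.
have hui := inv_hom hu uK Ku.
pose s := fun y => ui (al i1 j y).
have hs : is_hom s by exact: hom_comp.
have sb : forall a, s (be j i1 a) = a by move=> a; exact: uK.
have bs : forall y, be j i1 (s y) = y.
  have [[m m0] _] := (HCobj _ CA1).1.
  have [_ Hind] := (HCobj _ CYj).1.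
  case: (Hind (fun y => exists a, y = be j i1 a) (fun y => s y = 0)).
  - split; first by exists 0; rewrite (hom0 hbe).
    split; first by move=> x y [a ->] [b ->]; exists (a + b); rewrite hbe.1.
    by move=> r x [a ->]; exists (r *: a); rewrite hbe.2.
  - split; first exact: hom0 hs.
    split; first by move=> x y sx sy; rewrite hs.1 sx sy addr0.
    by move=> r x sx; rewrite hs.2 sx scaler0.
  - by move=> y [a ->]; rewrite sb => ->; rewrite (hom0 hbe).
  - move=> y; exists (be j i1 (s y)), (y - be j i1 (s y)); split; first by exists (s y).
    by split; [rewrite (homB _ _ hs) sb subrr | rewrite addrC subrK].
  - move=> H; exfalso; apply: m0.
    by rewrite -(sb m) (H (be j i1 m)) ?(hom0 hs) //; exists m.
  - move=> H y; have := H (y - be j i1 (s y)).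
    rewrite (homB _ _ hs) sb subrr => /(_ erefl) /eqP.
    by rewrite subr_eq0 => /eqP <-.
have cYj : same_class P (Y j) c0.
  exact: (sc_c0 c0 Cc0 _ _ CA1 CYj _ _ hbe hal nP cA1).
exists K, [pred k | aK k && (k != j)], Y, al,
  (fun k i x => be k i x - be k i1 (s (be j i x))).
split.
  have key : forall i i', aF i -> (i != i1) -> aF i' -> (i' != i1) -> forall x,
      \sum_(k | aK k && (k != j)) al i' k (be k i x - be k i1 (s (be j i x))) =
      \sum_(k | aK k) al i' k (be k i x).
    move=> i i' ai ni ai' ni' x.
    set a := s (be j i x).
    have e1 : \sum_(k | aK k) al i' k (be k i x) =
       \sum_(k | aK k) al i' k (be k i x - be k i1 a) +
       \sum_(k | aK k) al i' k (be k i1 a).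
      rewrite -big_split /=; apply: eq_bigr => k ak.
      by rewrite -(Hh i' k ai' ak).1.1 subrK.
    rewrite e1 (H0 i1 i' ai1 ai' _) 1?eq_sym // addr0 (bigD1 j aj) /=.
    by rewrite bs subrr (hom0 (Hh i' j ai' aj).1) add0r.
  split; first by move=> i /andP [ai _]; exact: HA.
  split; first by move=> k /andP [ak _]; exact: HY.
  split.
    move=> i k /andP [ai _] /andP [ak _]; split; first exact: (Hh i k ai ak).1.
    apply: hom_sub; first exact: (Hh i k ai ak).2.
    apply: hom_comp; last exact: (Hh i1 k ai1 ak).2.
    exact: hom_comp (Hh i j ai aj).2 hs.
  split.
    move=> i /andP [ai ni] x; rewrite -[RHS](Hid i ai x).
    exact (key i i ai ni ai ni x).
  move=> i i' /andP [ai ni] /andP [ai' ni'] nii' x.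
  rewrite -[RHS](H0 i i' ai ai' nii' x); exact (key i i' ai ni ai' ni' x).
rewrite /cnt [X in (_ < X)%N](cardD1 j) inE /= aj /=.
have -> : tb (same_class P (Y j) c0) by apply/tbP.
rewrite add1n ltnS; apply: subset_leq_card; apply/subsetP => k.
by rewrite !inE => /andP [/andP [-> ->] ->].
Qed.


Lemma step_dsp (c0 : rmod R) (Cc0 : C c0) (F : finType) (aF : pred F)
  (A : F -> rmod R) (K : finType) (aK : pred K) (Y : K -> rmod R)
  (al : forall i k, Y k -> A i) (be : forall k i, A i -> Y k) (i1 : F) (j k2 : K) :
  Good c0 F aF A K aK Y al be -> aF i1 -> aK j -> aK k2 ->
  ~ P (A i1) (A i1) (fun x => al i1 j (be j i1 x)) ->
  Q (A i1) (A i1) (fun x => al i1 j (be j i1 x)) ->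
  P (A i1) (A i1) (fun x => al i1 k2 (be k2 i1 x)) ->
  ~ Q (A i1) (A i1) (fun x => al i1 k2 (be k2 i1 x)) ->
  exists (K' : finType) (aK' : pred K') (Y' : K' -> rmod R)
    (al' : forall i k, Y' k -> A i) (be' : forall k i, A i -> Y' k),
    Good c0 F [pred i | aF i && (i != i1)] A K' aK' Y' al' be' /\
    (cnt c0 K' aK' Y' < cnt c0 K aK Y)%N.
Proof.
move=> [HA [HY [Hh [Hid H0]]]] ai1 aj ak2 nPj Qj Pk nQk.
have [CA1 cA1] := HA i1 ai1; have CYj := HY j aj; have CYk := HY k2 ak2.
have jk : j != k2.
  by apply/eqP => e; move: Pk; rewrite -e.
have [halj hbej] := Hh i1 j ai1 aj.
have [halk hbek] := Hh i1 k2 ai1 ak2.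
pose u := fun x => al i1 j (be j i1 x) + al i1 k2 (be k2 i1 x).
have hu : is_hom u by apply: hom_add; apply: hom_comp.
have nPu : ~ P _ _ u.
  move=> Pu; apply: nPj.
  have := Psub HP CA1 CA1 Pu Pk.
  have -> // : (fun x => u x - al i1 k2 (be k2 i1 x)) = (fun x => al i1 j (be j i1 x)).
  by apply: functional_extensionality => x; rewrite /u addrK.
have nQu : ~ Q _ _ u.
  move=> Qu; apply: nQk.
  have := Psub HQ CA1 CA1 Qu Qj.
  have -> // : (fun x => u x - al i1 j (be j i1 x)) = (fun x => al i1 k2 (be k2 i1 x)).
  by apply: functional_extensionality => x; rewrite /u addrC addKr.
have [ui uK Ku] : bijective u by apply/(Haut _ CA1 _ hu); case.
have hui := inv_hom hu uK Ku.
pose D : rmod R := kerM halj halk.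
pose s := fun v : Y j * Y k2 => ui (al i1 j v.1 + al i1 k2 v.2).
have sD : forall v w : Y j * Y k2, s (v.1 + w.1, v.2 + w.2) = s v + s w.
  move=> v w; rewrite /s /= halj.1 halk.1 addrACA; exact: hui.1.
have sZ : forall (r : R^c) (v : Y j * Y k2), s (r *: v.1, r *: v.2) = r *: s v.
  move=> r v; rewrite /s /= halj.2 halk.2 -scalerDr; exact: hui.2.
have sb : forall a, s (be j i1 a, be k2 i1 a) = a by move=> a; exact: uK.
have projP : forall v : Y j * Y k2,
    kerP (al i1 j) (al i1 k2) (v.1 - be j i1 (s v), v.2 - be k2 i1 (s v)).
  move=> v; rewrite /kerP /= (homB _ _ halj) (homB _ _ halk) addrACA -opprD.
  by rewrite -/(u (s v)) /s Ku subrr.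
pose proj := fun v : Y j * Y k2 => (KerT (projP v) : D).
have kproj : forall v, kval (proj v) = (v.1 - be j i1 (s v), v.2 - be k2 i1 (s v)).
  by [].
have projD : forall v w : Y j * Y k2, proj (v.1 + w.1, v.2 + w.2) = proj v + proj w.
  move=> v w; apply: kval_inj.
  transitivity ((kval (proj v)).1 + (kval (proj w)).1, (kval (proj v)).2 + (kval (proj w)).2);
    last by [].
  rewrite !kproj /= sD hbej.1 hbek.1.
  by congr pair; rewrite opprD addrACA.
have projZ : forall (r : R^c) (v : Y j * Y k2), proj (r *: v.1, r *: v.2) = r *: proj v.
  move=> r v; apply: kval_inj.
  transitivity (r *: (kval (proj v)).1, r *: (kval (proj v)).2); last by [].
  by rewrite !kproj /= sZ hbej.2 hbek.2 !scalerBr.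
have k1hom : is_hom (fun d : D => (kval d).1) by split.
have k2hom : is_hom (fun d : D => (kval d).2) by split.
have CD : C D.
  apply: (Hdsp (Y j) (Y k2) (A i1) D CYj CYk CA1).
  exists (fun v => (s v, proj v)); split.
    exists (fun w : A i1 * D => (be j i1 w.1 + (kval w.2).1, be k2 i1 w.1 + (kval w.2).2)).
      move=> [v1 v2] /=.
      by rewrite /= addrC subrK addrC subrK.
    move=> [a d].
    have sa : s (be j i1 a + (kval d).1, be k2 i1 a + (kval d).2) = a.
      rewrite /s /= halj.1 halk.1 addrACA.
      have /eqP -> := kvalP d; rewrite addr0; exact: sb.
    congr pair; first exact: sa.
    apply: kval_inj; rewrite kproj /= sa.
    rewrite [be j i1 a + _]addrC [be k2 i1 a + _]addrC !addrK.
    by case: (kval d).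
  split.
    by move=> x y; rewrite sD projD.
  by move=> r x; rewrite sZ projZ.
have key_c : same_class P D c0 -> same_class P (Y k2) c0.
  move=> cD.
  pose f1 := fun y : Y k2 => s (0, y).
  pose f2 := fun y : Y k2 => proj (0, y).
  have hf1 : is_hom f1.
    split=> [x y|r x]; rewrite /f1.
      by rewrite -sD /= addr0.
    by rewrite -sZ /= scaler0.
  have hf2 : is_hom f2.
    split=> [x y|r x]; rewrite /f2.
      by rewrite -projD /= addr0.
    by rewrite -projZ /= scaler0.
  have idt : forall y, be k2 i1 (f1 y) + (kval (f2 y)).2 = y.
    by move=> y; rewrite kproj /= addrC subrK.
  case: (classic (P _ _ (fun y => be k2 i1 (f1 y)))) => [P1|nP1]; last first.
    have sc := sc_of_comp HP CYk CA1 hf1 hbek nP1.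
    exact (sc_trans HP CYk CA1 Cc0 sc cA1).
  case: (classic (P _ _ (fun y => (kval (f2 y)).2))) => [P2|nP2]; last first.
    have sc := sc_of_comp HP CYk CD hf2 k2hom nP2.
    exact (sc_trans HP CYk CD Cc0 sc cD).
  exfalso; apply: (Pid_not HP CYk); have := Padd HP CYk CYk P1 P2.
  have -> // : (fun y => be k2 i1 (f1 y) + (kval (f2 y)).2) = (fun y => y).
  by apply: functional_extensionality => y; exact: idt.
pose Y' : option K -> rmod R := fun o => if o is Some k then Y k else D.
pose al' : forall i o, Y' o -> A i := fun i o =>
  match o as o0 return Y' o0 -> A i with
  | Some k => al i k
  | None => fun d : D => al i j (kval d).1 + al i k2 (kval d).2 end.
pose be' : forall o i, A i -> Y' o := fun o i =>
  match o as o0 return A i -> Y' o0 with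
  | Some k => fun x => be k i x - be k i1 (s (be j i x, be k2 i x))
  | None => fun x => proj (be j i x, be k2 i x) end.
pose aK' : pred (option K) := fun o =>
  if o is Some k then aK k && (k != j) && (k != k2) else true.
exists (option K), aK', Y', al', be'.
split.
  have key : forall i i', aF i -> (i != i1) -> aF i' -> (i' != i1) -> forall x,
      \sum_(o | aK' o) al' i' o (be' o i x) = \sum_(k | aK k) al i' k (be k i x).
    move=> i i' ai ni ai' ni' x.
    set a := s (be j i x, be k2 i x).
    have e1 : \sum_(k | aK k) al i' k (be k i x) =
       \sum_(k | aK k) al i' k (be k i x - be k i1 a) +
       \sum_(k | aK k) al i' k (be k i1 a).
      rewrite -big_split /=; apply: eq_bigr => k ak.
      by rewrite -(Hh i' k ai' ak).1.1 subrK.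
    rewrite e1 (H0 i1 i' ai1 ai' _) 1?eq_sym // addr0 (bigD1 j aj) /=.
    rewrite (bigD1 k2) /=; last by rewrite ak2 eq_sym jk.
    rewrite (@big_option_split _ 0 +%R _ aK') /= addrA.
    by [].
  split; first by move=> i /andP [ai _]; exact: HA.
  split; first by case=> [k /andP [/andP [ak _] _]|_]; [exact: HY | exact: CD].
  split.
    move=> i [k|] /andP [ai ni] ako.
      move: ako => /andP [/andP [ak _] _].
      split; first exact: (Hh i k ai ak).1.
      apply: hom_sub; first exact: (Hh i k ai ak).2.
      apply: hom_comp; last exact: (Hh i1 k ai1 ak).2.
      have [_ hj] := Hh i j ai aj; have [_ hk] := Hh i k2 ai ak2.
      split=> [x y|r x].
        by rewrite hj.1 hk.1; exact: sD (be j i x, be k2 i x) (be j i y, be k2 i y).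
      by rewrite hj.2 hk.2; exact: sZ r (be j i x, be k2 i x).
    have [hj' hj] := Hh i j ai aj; have [hk' hk] := Hh i k2 ai ak2.
    split.
      exact: hom_add (hom_comp k1hom hj') (hom_comp k2hom hk').
    split=> [x y|r x].
      by rewrite /= hj.1 hk.1; exact: projD (be j i x, be k2 i x) (be j i y, be k2 i y).
    by rewrite /= hj.2 hk.2; exact: projZ r (be j i x, be k2 i x).
  split.
    move=> i /andP [ai ni] x; rewrite -[RHS](Hid i ai x).
    exact (key i i ai ni ai ni x).
  move=> i i' /andP [ai ni] /andP [ai' ni'] nii' x.
  rewrite -[RHS](H0 i i' ai ai' nii' x); exact (key i i' ai ni ai' ni' x).
rewrite /cnt (card_option_split (fun o => aK' o && tb (same_class P (Y' o) c0))) /=.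
rewrite [X in (_ < X)%N](cardD1 j) inE /= aj.
have -> : tb (same_class P (Y j) c0).
  by apply/tbP; exact: (sc_c0 c0 Cc0 _ _ CA1 CYj _ _ hbej halj nPj cA1).
rewrite [X in (_ < 1 + X)%N](cardD1 k2) !inE /= eq_sym jk ak2 /=.
set r1 := #|[pred k | _]|; set r2 := #|[predD1 _ & k2]|.
have le12 : (r1 <= r2)%N.
  apply: subset_leq_card; apply/subsetP => k.
  by rewrite !inE => /andP [/andP [/andP [-> ->] ->] ->].
case: (boolP (tb (same_class P (Y k2) c0))) => ck.
  by rewrite add1n ltnS; exact: (leq_add (leq_b1 _) le12).
case: (boolP (tb (same_class P D c0))) => cD.
  by exfalso; move/negP: ck; apply; apply/tbP; apply: key_c; apply/tbP.
by rewrite !add0n add1n ltnS.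
Qed.



Lemma core (c0 : rmod R) (Cc0 : C c0) n : forall (F : finType) (aF : pred F)
  (A : F -> rmod R) (K : finType) (aK : pred K) (Y : K -> rmod R)
  (al : forall i k, Y k -> A i) (be : forall k i, A i -> Y k),
  #|[pred i | aF i]| = n -> Good c0 F aF A K aK Y al be -> (n <= cnt c0 K aK Y)%N.
Proof.
elim: n => [|n IH] F aF A K aK Y al be cardF G; first done.
have /card_gt0P [i1 ai1] : (0 < #|[pred i | aF i]|)%N by rewrite cardF.
rewrite inE in ai1.
have cardF' : #|[pred i | aF i && (i != i1)]| = n.
  move: cardF; rewrite (cardD1 i1) inE ai1 add1n => -[<-].
  by apply: eq_card => i; rewrite !inE andbC.
have G0 := G; case: G => [HA [HY [Hh [Hid H0]]]].
have [CA1 _] := HA i1 ai1.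
have [j [aj nPj]] := some_term P HP (A i1) CA1 K aK
   (fun k x => al i1 k (be k i1 x)) (Hid i1 ai1).
have [k2 [ak2 nQk]] := some_term Q HQ (A i1) CA1 K aK
   (fun k x => al i1 k (be k i1 x)) (Hid i1 ai1).
case: (classic (exists j', aK j' /\ ~ P _ _ (fun x => al i1 j' (be j' i1 x))
                              /\ ~ Q _ _ (fun x => al i1 j' (be j' i1 x)))).
  move=> [j' [aj' [nP nQ]]].
  have [K' [aK' [Y' [al' [be' [G' lt]]]]]] :=
    step_simple c0 Cc0 F aF A K aK Y al be i1 j' G0 ai1 aj' nP nQ.
  exact: leq_ltn_trans (IH _ _ _ _ _ _ _ _ cardF' G') lt.
move=> nsimple.
have Qj : Q _ _ (fun x => al i1 j (be j i1 x)).
  by apply: NNPP => nQ; apply: nsimple; exists j.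
have Pk : P _ _ (fun x => al i1 k2 (be k2 i1 x)).
  by apply: NNPP => nP; apply: nsimple; exists k2.
have [K' [aK' [Y' [al' [be' [G' lt]]]]]] :=
  step_dsp c0 Cc0 F aF A K aK Y al be i1 j k2 G0 ai1 aj ak2 nPj Qj Pk nQk.
exact: leq_ltn_trans (IH _ _ _ _ _ _ _ _ cardF' G') lt.
Qed.


Lemma sum_seq_sub (T : choiceType) (s : seq T) (V : zmodType) (G : T -> V) :
  uniq s -> \sum_(k : seq_sub s) G (val k) = \sum_(j <- s) G j.
Proof.
move=> us; rewrite -[in RHS](val_seq_sub_enum us) big_map.
apply: perm_big; apply: uniq_perm.
- exact: index_enum_uniq.
- by rewrite /seq_sub_enum undup_uniq.
- by move=> k; rewrite mem_index_enum mem_seq_sub_enum.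
Qed.

Lemma transfer (I J : countType) (A : I -> rmod R) (B : J -> rmod R)
  (HA : forall i, C (A i)) (HB : forall j, C (B j))
  (Phi : (forall i, A i) -> (forall j, B j)) (Psi : (forall j, B j) -> (forall i, A i))
  (PhiD : forall x y, Phi (fun i => x i + y i) = (fun j => Phi x j + Phi y j))
  (PhiZ : forall (r : R^c) x, Phi (fun i => r *: x i) = (fun j => r *: Phi x j))
  (PsiD : forall x y, Psi (fun i => x i + y i) = (fun j => Psi x j + Psi y j))
  (PsiZ : forall (r : R^c) x, Psi (fun i => r *: x i) = (fun j => r *: Psi x j))
  (PsiPhi : forall x, Psi (Phi x) = x)
  (c0 : rmod R) (Cc0 : C c0) (f : seq I) :
  uniq f -> (forall i, i \in f -> same_class P (A i) c0) ->
  exists g : seq J, uniq g /\ (forall j, j \in g -> same_class P (B j) c0) /\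
    (size f <= size g)%N.
Proof.
move=> uf cf.
have exp : forall i, exists n0, forall N, (n0 <= N)%N -> forall y : forall j, B j,
    Psi y i = \sum_(j <- pmap (@pickle_inv J) (iota 0 N)) Psi (single (y j)) i.
  move=> i; apply: (@expand_lemma _ J B (A i) (fun y => Psi y i)).
  - by move=> y z; rewrite PsiD.
  - by move=> r y; rewrite PsiZ.
  - exact: (HCobj _ (HA i)).2.
have [N HN] : exists N, forall i, i \in f -> forall y : forall j, B j,
    Psi y i = \sum_(j <- pmap (@pickle_inv J) (iota 0 N)) Psi (single (y j)) i.
  have : exists N0, forall N, (N0 <= N)%N -> forall i, i \in f -> forall y : forall j, B j,
    Psi y i = \sum_(j <- pmap (@pickle_inv J) (iota 0 N)) Psi (single (y j)) i.
    elim: (f) => [|i f' [N1 IH]]; first by exists 0%N.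
    have [n0 Hn0] := exp i.
    exists (maxn n0 N1) => N le i'; rewrite in_cons => /orP [/eqP ->|].
      by apply: Hn0; apply: leq_trans le; exact: leq_maxl.
    by apply: IH; apply: leq_trans le; exact: leq_maxr.
  by move=> [N0 H]; exists N0; exact: H.
set s := pmap _ _ in HN.
have us : uniq s by apply: (pmap_uniq (@pickle_invK J)); exact: iota_uniq.
pose Fty := seq_sub f.
pose Kty := seq_sub s.
pose A' := fun i : Fty => A (val i).
pose Y := fun k : Kty => B (val k).
pose al := fun (i : Fty) (k : Kty) (b : Y k) => Psi (@single _ J B (val k) b) (val i).
pose be := fun (k : Kty) (i : Fty) (a : A' i) => Phi (@single _ I A (val i) a) (val k).
have G : Good c0 Fty (fun _ => true) A' Kty (fun _ => true) Y al be.
  split; first by move=> i _; split; [exact: HA | apply: cf; exact: ssvalP].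
  split; first by move=> k _; exact: HB.
  split.
    move=> i k _ _; split; split.
    - move=> x y; rewrite /al.
      have -> : @single _ J B (val k) (x + y) = (fun j => @single _ J B (val k) x j + @single _ J B (val k) y j).
        by apply: functional_extensionality_dep => j; rewrite single_add.
      by rewrite PsiD.
    - move=> r x; rewrite /al.
      have -> : @single _ J B (val k) (r *: x) = (fun j => r *: @single _ J B (val k) x j).
        by apply: functional_extensionality_dep => j; rewrite single_scale.
      by rewrite PsiZ.
    - move=> x y; rewrite /be.
      have -> : @single _ I A (val i) (x + y) = (fun j => @single _ I A (val i) x j + @single _ I A (val i) y j).
        by apply: functional_extensionality_dep => j; rewrite single_add.
      by rewrite PhiD.
    - move=> r x; rewrite /be.
      have -> : @single _ I A (val i) (r *: x) = (fun j => r *: @single _ I A (val i) x j).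
        by apply: functional_extensionality_dep => j; rewrite single_scale.
      by rewrite PhiZ.
  have key : forall (i i' : Fty) (x : A' i),
      \sum_(k | true) al i' k (be k i x) = single (A:=A) x (val i').
    move=> i i' x.
    rewrite /al /be (@sum_seq_sub J s _
       (fun j => Psi (@single _ J B j (Phi (@single _ I A (val i) x) j)) (val i')) us).
    by rewrite -HN ?PsiPhi //; exact: ssvalP.
  split.
    by move=> i _ x; rewrite key single_id.
  move=> i i' _ _ nii' x; rewrite key single_neq //.
have := core c0 Cc0 _ Fty (fun _ => true) A' Kty (fun _ => true) Y al be erefl G.
have -> : #|[pred i : Fty | true]| = size f.
  by rewrite -(card_seq_sub uf); apply: eq_card.
rewrite /cnt => le.
exists [seq val k | k <- enum [pred k : Kty | true && tb (same_class P (Y k) c0)]].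
split; first by rewrite (map_inj_uniq val_inj) enum_uniq.
split; last by rewrite size_map -cardE.
move=> j /mapP [k]; rewrite mem_enum inE /= => /tbP ck ->; exact: ck.
Qed.

End Core.

Section Rank.
Variables (T : countType) (q : pred T).

Definition code (n : nat) : bool :=
  if @pickle_inv T n is Some y then q y else false.
Definition cc (N : nat) : nat := count code (iota 0 N).
Definition rk (x : T) : nat := cc (pickle x).

Lemma ccS N : cc N.+1 = (cc N + code N)%N.
Proof. by rewrite /cc -addn1 iotaD count_cat /= addn0 add0n. Qed.

Lemma cc_mono N M : (N <= M)%N -> (cc N <= cc M)%N.
Proof.
move=> le; rewrite -(subnKC le); elim: (M - N)%N => [|d IH]; first by rewrite addn0.
by rewrite addnS ccS (leq_trans IH) // leq_addr.
Qed.

Lemma code_pickle x : code (pickle x) = q x.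
Proof. by rewrite /code pickleK_inv. Qed.

Lemma rk_inj x y : q x -> q y -> rk x = rk y -> x = y.
Proof.
move=> qx qy e.
have H : forall a b, q a -> (pickle a < pickle b)%N -> (rk a < rk b)%N.
  move=> a b qa lt; rewrite /rk.
  apply: (@leq_trans (cc (pickle a).+1)); last exact: cc_mono.
  by rewrite ccS code_pickle qa addn1.
case: (ltngtP (pickle x) (pickle y)) => [lt|gt|eq].
- by have := H _ _ qx lt; rewrite e ltnn.
- by have := H _ _ qy gt; rewrite e ltnn.
- exact: (pcan_inj (@pickleK_inv T)) eq.
Qed.

Lemma cc_hit M m : (m < cc M)%N -> exists N, (N < M)%N /\ cc N = m /\ code N.
Proof.
elim: M => [|M IH]; first by [].
rewrite ccS => lt.
case: (ltnP m (cc M)) => [lt'|ge].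
  by have [N [NM [e c]]] := IH lt'; exists N; split => //; exact: ltnW.
case cM: (code M); last by move: lt; rewrite cM addn0 ltnNge ge.
exists M; split => //; split => //.
by apply/eqP; rewrite eqn_leq ge /=; move: lt; rewrite cM addn1 ltnS.
Qed.

Lemma rk_down x m : q x -> (m <= rk x)%N -> exists y, q y /\ rk y = m.
Proof.
move=> qx; rewrite leq_eqVlt => /orP [/eqP ->|lt]; first by exists x.
have [N [_ [e c]]] := cc_hit (pickle x) m lt.
move: c; rewrite /code; case E: (pickle_inv N) => [y|] // qy.
exists y; split => //; rewrite /rk.
by have := @pickle_invK T N; rewrite E /= => ->.
Qed.

Lemma rk_list x : q x -> exists l : seq T, uniq l /\ all q l /\ size l = (rk x).+1.
Proof.
move=> qx.
pose fc := fun n => match @pickle_inv T n with Some y => if q y then Some y else None | None => None end.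
have fcK : ocancel fc (@pickle T).
  move=> n; rewrite /fc; case E: (pickle_inv n) => [y|] //=.
  by case: (q y) => //=; have := @pickle_invK T n; rewrite E.
pose l0 := pmap fc (iota 0 (pickle x)).
have ml0 : forall y, y \in l0 -> q y /\ (pickle y < pickle x)%N.
  move=> y; rewrite /l0 mem_pmap => /mapP [n]; rewrite mem_iota add0n => /andP [_ lt].
  rewrite /fc; case E: (pickle_inv n) => [z|] //; case qz: (q z) => // -[ez].
  subst z; split => //; have := @pickle_invK T n; rewrite E /= => ->; exact: lt.
exists (x :: l0); split.
  rewrite /= (pmap_uniq fcK) ?iota_uniq // andbT.
  by apply/negP => /ml0 [_]; rewrite ltnn.
split.
  by rewrite /= qx /=; apply/allP => y /ml0 [].
rewrite /= size_pmap /rk /cc; congr S; apply: eq_count => n.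
by rewrite /fc /code; case: (pickle_inv n) => [y|] //=; case: (q y).
Qed.

Lemma list_rk (l : seq T) k : uniq l -> all q l -> (k < size l)%N ->
  exists y, q y /\ rk y = k.
Proof.
move=> ul al lt.
have [x [xl ge]] : exists x, x \in l /\ (k <= rk x)%N.
  apply: NNPP => H.
  have sub : {subset map rk l <= iota 0 k}.
    move=> n /mapP [x xl ->]; rewrite mem_iota add0n /=.
    by rewrite ltnNge; apply/negP => ge; apply: H; exists x.
  have := uniq_leq_size _ sub; rewrite size_map size_iota.
  rewrite (map_inj_in_uniq _) // => [/(_ ul)|]; first by rewrite leqNgt lt.
  by move=> a b al' bl; apply: rk_inj; [exact: (allP al) | exact: (allP al)].
exact: rk_down x k (allP al x xl) ge.
Qed.

End Rank.

Lemma rk_ext (T : countType) (q1 q2 : pred T) x : q1 =1 q2 -> rk T q1 x = rk T q2 x.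
Proof.
move=> e; rewrite /rk /cc; apply: eq_count => n; rewrite /code.
by case: (pickle_inv n) => [y|] //; rewrite e.
Qed.

Lemma glue (I J : countType) (eI : I -> I -> bool) (eJ : J -> J -> bool)
  (r : I -> J -> bool)
  (HreflI : forall i, eI i i) (HreflJ : forall j, eJ j j)
  (HE1 : forall i i' j, r i j -> r i' j -> eI i =1 eI i' /\ r i =1 r i')
  (HE2 : forall i j, r i j -> eI i =1 (fun i0 => r i0 j) /\ r i =1 eJ j)
  (HIJ : forall i (l : seq I), uniq l -> all (eI i) l ->
     exists l' : seq J, uniq l' /\ all (r i) l' /\ (size l <= size l')%N)
  (HJI : forall j (l : seq J), uniq l -> all (eJ j) l ->
     exists l' : seq I, uniq l' /\ all (fun i => r i j) l' /\ (size l <= size l')%N) :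
  exists sigma : I -> J, bijective sigma /\ forall i, r i (sigma i).
Proof.
have ex : forall i, exists j, r i j /\ rk J (r i) j = rk I (eI i) i.
  move=> i; have [l [ul [al sl]]] := rk_list I (eI i) i (HreflI i).
  have [l' [ul' [al' sl']]] := HIJ i l ul al.
  apply: (list_rk J (r i) l' _ ul' al'); by rewrite -sl.
pose sigma i := proj1_sig (constructive_indefinite_description _ (ex i)).
have sP : forall i, r i (sigma i) /\ rk J (r i) (sigma i) = rk I (eI i) i.
  by move=> i; exact: (proj2_sig (constructive_indefinite_description _ (ex i))).
have inj : injective sigma.
  move=> i i' e; have [ri ki] := sP i; have [ri' ki'] := sP i'.
  rewrite e in ri ki.
  have [E R1] := HE1 i i' _ ri ri'.
  apply: (rk_inj I (eI i) i i' (HreflI i)); first by rewrite E HreflI.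
  by rewrite -ki (rk_ext _ _ _ _ R1) ki' (rk_ext _ _ _ _ E).
have surj : forall j, exists i, sigma i = j.
  move=> j; have [l [ul [al sl]]] := rk_list J (eJ j) j (HreflJ j).
  have [l' [ul' [al' sl']]] := HJI j l ul al.
  have [i [rij ki]] : exists i, r i j /\ rk I (fun i => r i j) i = rk J (eJ j) j.
    apply: (list_rk I (fun i => r i j) l' _ ul' al'); by rewrite -sl.
  exists i; have [ri' ki'] := sP i; have [E2 R2] := HE2 i j rij.
  apply: (rk_inj J (r i) _ _ ri' rij).
  by rewrite ki' (rk_ext _ _ _ _ E2) ki (rk_ext _ _ _ _ R2).
pose tau j := proj1_sig (constructive_indefinite_description _ (surj j)).
have tauK : forall j, sigma (tau j) = j.
  by move=> j; exact: (proj2_sig (constructive_indefinite_description _ (surj j))).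
exists sigma; split; last by move=> i; exact: (sP i).1.
exists tau; last exact: tauK.
by move=> i; apply: inj; rewrite tauK.
Qed.

Lemma tb_eq (p q : Prop) : (p <-> q) -> tb p = tb q.
Proof. by move=> [pq qp]; apply/tbP/tbP. Qed.

Lemma one_dir (R : pzRingType) (C : subcat R) (P Q : hom_ideal R)
  (HCobj : forall M, C M -> indecomposable M /\ slender M)
  (HP : completely_prime C P) (HQ : completely_prime C Q)
  (Haut : forall A, C A -> forall f : A -> A, is_hom f ->
            (bijective f <-> ~ (P A A f \/ Q A A f)))
  (Hdsp : DSP C)
  (I J : countType) (A : I -> rmod R) (B : J -> rmod R)
  (HA : forall i, C (A i)) (HB : forall j, C (B j))
  (Phi : (forall i, A i) -> (forall j, B j)) (Psi : (forall j, B j) -> (forall i, A i))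
  (PhiD : forall x y, Phi (fun i => x i + y i) = (fun j => Phi x j + Phi y j))
  (PhiZ : forall (r : R^c) x, Phi (fun i => r *: x i) = (fun j => r *: Phi x j))
  (PsiD : forall x y, Psi (fun i => x i + y i) = (fun j => Psi x j + Psi y j))
  (PsiZ : forall (r : R^c) x, Psi (fun i => r *: x i) = (fun j => r *: Psi x j))
  (PsiPhi : forall x, Psi (Phi x) = x) (PhiPsi : forall y, Phi (Psi y) = y) :
  exists sigma : I -> J, bijective sigma /\
    forall i, same_class P (A i) (B (sigma i)).
Proof.
have tr := fun (X Y Z : rmod R) (CX : C X) (CY : C Y) (CZ : C Z) =>
  @sc_trans R C P HP X Y Z CX CY CZ.
have sy := fun (X Y : rmod R) => @sc_sym R P X Y.
have [sigma [bs hs]] : exists sigma : I -> J, bijective sigma /\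
   forall i, tb (same_class P (A i) (B (sigma i))).
  apply: (glue I J
  (fun i i' => tb (same_class P (A i) (A i')))
  (fun j j' => tb (same_class P (B j) (B j')))
  (fun i j => tb (same_class P (A i) (B j)))).
  - by move=> i /=; apply/tbP; exact: (@sc_refl R C P HP (A i) (HA i)).
  - by move=> j /=; apply/tbP; exact: (@sc_refl R C P HP (B j) (HB j)).
  - move=> i i' j /= /tbP r1 /tbP r2.
    have e : same_class P (A i) (A i') := tr _ _ _ (HA i) (HB j) (HA i') r1 (sy _ _ r2).
    split=> i0; apply: tb_eq; split => h.
    + exact: tr _ _ _ (HA i') (HA i) (HA i0) (sy _ _ e) h.
    + exact: tr _ _ _ (HA i) (HA i') (HA i0) e h.
    + exact: tr _ _ _ (HA i') (HA i) (HB i0) (sy _ _ e) h.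
    + exact: tr _ _ _ (HA i) (HA i') (HB i0) e h.
  - move=> i j /= /tbP r1.
    split=> i0; apply: tb_eq; split => h.
    + exact: tr _ _ _ (HA i0) (HA i) (HB j) (sy _ _ h) r1.
    + exact: tr _ _ _ (HA i) (HB j) (HA i0) r1 (sy _ _ h).
    + exact: tr _ _ _ (HB j) (HA i) (HB i0) (sy _ _ r1) h.
    + exact: tr _ _ _ (HA i) (HB j) (HB i0) r1 h.
  - move=> i l ul al.
    have [g [ug [cg sg]]] := transfer R C P Q HCobj HP HQ Haut Hdsp I J A B HA HB
      Phi Psi PhiD PhiZ PsiD PsiZ PsiPhi (A i) (HA i) l ul
      (fun i0 h => sy _ _ (elimT (tbP _) (allP al i0 h))).
    exists g; split => //; split => //.
    by apply/allP => j jg; apply/tbP; apply: sy; exact: cg.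
  - move=> j l ul al.
    have [g [ug [cg sg]]] := transfer R C P Q HCobj HP HQ Haut Hdsp J I B A HB HA
      Psi Phi PsiD PsiZ PhiD PhiZ PhiPsi (B j) (HB j) l ul
      (fun j0 h => sy _ _ (elimT (tbP _) (allP al j0 h))).
    exists g; split => //; split => //.
    by apply/allP => i ig; apply/tbP; exact: cg.
exists sigma; split => // i; exact/tbP.
Qed.

Unset Implicit Arguments.
Local Close Scope ring_scope.

Theorem corollary5p4 (R : pzRingType) (C : subcat R) (P Q : hom_ideal R)
  (HCobj : forall M, C M -> indecomposable M /\ slender M)
  (HP : completely_prime C P) (HQ : completely_prime C Q)
  (Haut : forall A, C A -> forall f : A -> A, is_hom f ->
            (bijective f <-> ~ (P A A f \/ Q A A f)))
  (Hdsp : DSP C)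
  (I J : countType) (A : I -> rmod R) (B : J -> rmod R)
  (HA : forall i, C (A i)) (HB : forall j, C (B j))
  (Hiso : exists Phi, @prod_iso R I J A B Phi) :
  exists sigma tau : I -> J, bijective sigma /\ bijective tau /\
    (forall i, same_class P (A i) (B (sigma i)) /\
               same_class Q (A i) (B (tau i))).
Proof.
have [Phi [[Psi PhiK PsiK] [PhiD PhiZ]]] := Hiso.
have PsiD : forall x y, Psi (fun i => (x i + y i)%R) = (fun j => (Psi x j + Psi y j)%R).
  by move=> x y; apply: (can_inj PhiK); rewrite PhiD !PsiK.
have PsiZ : forall (r : R^c) x, Psi (fun i => (r *: x i)%R) = (fun j => (r *: Psi x j)%R).
  by move=> r x; apply: (can_inj PhiK); rewrite PhiZ !PsiK.
have Haut' : forall A, C A -> forall f : A -> A, is_hom f ->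
            (bijective f <-> ~ (Q A A f \/ P A A f)).
  move=> X CX f hf; rewrite (Haut X CX f hf).
  by split=> h [x|x]; apply: h; [right|left|right|left].
have [sigma [bs hs]] := one_dir R C P Q HCobj HP HQ Haut Hdsp I J A B HA HB
  Phi Psi PhiD PhiZ PsiD PsiZ PhiK PsiK.
have [tau [bt ht]] := one_dir R C Q P HCobj HQ HP Haut' Hdsp I J A B HA HB
  Phi Psi PhiD PhiZ PsiD PsiZ PhiK PsiK.
by exists sigma, tau.
Qed.
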